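(* Assume $k\ge 2$. Let $A:V\to V$ be an isomorphism of the model $\mathcal V$, i.e. a linear bijection with $(Ax,Ay)=(x,y)$ and $R(Ax,Ay,Az,Aw)=R(x,y,z,w)$ for all $x,y,z,w\in V$. Then there exist a permutation $\sigma$ of $\{1,\dots,k\}$ and real constants $a_0$ and $b_1,\dots,b_k$ with $|a_0|\,b_i^2=1$ for all $i$, such that for $1\le i\le k$: $AU_0=a_0U_0+\Xi_0$ with $\Xi_0\in A_V$; $AU_i=b_iU_{\sigma(i)}+\Xi_i$ with $\Xi_i\in A_{S,V}$; and $AS_i=\operatorname{sign}(a_0)S_{\sigma(i)}+\bar\Xi_i$ with $\bar\Xi_i\in A_V$.
   Context: Fix integers $k\ge1$ and signs $\varepsilon_1,\dots,\varepsilon_k\in\{\pm1\}$. Let $V=\mathbb R^{3k+2}$ with basis $\{U_0,\dots,U_k,V_0,\dots,V_k,S_1,\dots,S_k\}$, let $(\cdot,\cdot)$ be the symmetric inner product whose only nonzero values on pairs of basis vectors are $(U_i,V_i)=(V_i,U_i)=1$ for $0\le i\le k$ and $(S_i,S_i)=\varepsilon_i$ for $1\le i\le k$, and let $R$ be the algebraic curvature tensor on $V$ (a 4-linear form with $R(x,y,z,w)=-R(y,x,z,w)=R(z,w,x,y)$ and $R(x,y,z,w)+R(y,z,x,w)+R(z,x,y,w)=0$) whose only nonzero values on 4-tuples of basis vectors are those obtained from $R(U_0,U_i,U_i,S_i)=1$ ($1\le i\le k$) by these symmetries. Set $\mathcal V=(V,(\cdot,\cdot),R)$. Define $A_V=\{\xi\in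 V: R(\xi,y,z,w)=0\ \forall y,z,w\}=\ker R$ (which equals $\mathrm{Span}\{V_0,\dots,V_k\}$) and $A_{S,V}=A_V^{\perp}$ (which equals $\mathrm{Span}\{S_1,\dots,S_k,V_0,\dots,V_k\}$). *)

(* Defs.v *)
From HB Require Import structures.
From mathcomp Require Import all_boot all_order all_fingroup all_algebra.
Set Implicit Arguments. Unset Strict Implicit. Unset Printing Implicit Defensive.
Import Order.TTheory GRing.Theory Num.Theory.
Local Open Scope ring_scope.

(* Index set of the basis {U_0..U_k, V_0..V_k, S_1..S_k}:
   U_i  ~ inl (inl i), i : 'I_k.+1  (i = 0..k)
   V_i  ~ inl (inr i), i : 'I_k.+1  (i = 0..k)
   S_i  ~ inr j,       j : 'I_k     (S_i with i = j+1, i = 1..k)         *)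
Definition idx (k : nat) : finType := ('I_k.+1 + 'I_k.+1 + 'I_k)%type.

Definition iU k (i : 'I_k.+1) : idx k := inl (inl i).
Definition iV k (i : 'I_k.+1) : idx k := inl (inr i).
Definition iS k (j : 'I_k) : idx k := inr j.
Definition iU' k (j : 'I_k) : idx k := iU (lift ord0 j).

Notation vec R k := {ffun idx k -> R^o}.

Definition bvec (R : realFieldType) k (a : idx k) : vec R k :=
  [ffun b => (b == a)%:R].

Definition bU (R : realFieldType) k (i : 'I_k.+1) : vec R k := bvec R (iU i).
Definition bU' (R : realFieldType) k (j : 'I_k) : vec R k := bvec R (iU' j).
Definition bS (R : realFieldType) k (j : 'I_k) : vec R k := bvec R (iS j).

Definition gram (R : realFieldType) k (eps : 'I_k -> R) (a b : idx k) : R :=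
  \sum_(i < k.+1) (((a, b) == (iU i, iV i))%:R + ((a, b) == (iV i, iU i))%:R)
  + \sum_(j < k) ((a, b) == (iS j, iS j))%:R * eps j.

Definition ip (R : realFieldType) k (eps : 'I_k -> R) (x y : vec R k) : R :=
  \sum_(a : idx k) \sum_(b : idx k) x a * y b * gram eps a b.

(* Values of R on 4-tuples of basis vectors: those generated from
   R(U_0,U_i,U_i,S_i) = 1 by the curvature symmetries, all others 0. *)
Definition curvb (R : realFieldType) k (a b c d : idx k) : R :=
  \sum_(j < k)
    let u0 := iU (@ord0 k) in let ui := iU' j in let si := iS j in
    ( ((a, b, c, d) == (u0, ui, ui, si))%:R
    + ((a, b, c, d) == (ui, u0, si, ui))%:R
    + ((a, b, c, d) == (ui, si, u0, ui))%:R
    + ((a, b, c, d) == (si, ui, ui, u0))%:R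
    - ((a, b, c, d) == (ui, u0, ui, si))%:R
    - ((a, b, c, d) == (u0, ui, si, ui))%:R
    - ((a, b, c, d) == (si, ui, u0, ui))%:R
    - ((a, b, c, d) == (ui, si, ui, u0))%:R ).

Definition curv (R : realFieldType) k (x y z w : vec R k) : R :=
  \sum_(a : idx k) \sum_(b : idx k) \sum_(c : idx k) \sum_(d : idx k)
    x a * y b * z c * w d * curvb R a b c d.

Definition AV (R : realFieldType) k (xi : vec R k) : Prop :=
  forall y z w : vec R k, curv xi y z w = 0.

Definition ASV (R : realFieldType) k (eps : 'I_k -> R) (x : vec R k) : Prop :=
  forall xi : vec R k, AV xi -> ip eps x xi = 0.

(* Main.v *)
Require Import Defs.
From HB Require Import structures.
From mathcomp Require Import all_boot all_order all_fingroup all_algebra.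
From mathcomp Require Import ring lra.
Import Order.TTheory GRing.Theory Num.Theory.
Local Open Scope ring_scope.

Section Aux.
Variable (R : realFieldType) (k : nat).
Implicit Types (x y z w : vec R k).

Definition S4 (F : idx k -> idx k -> idx k -> idx k -> R) : R :=
  \sum_(a : idx k) \sum_(b : idx k) \sum_(c : idx k) \sum_(d : idx k) F a b c d.

Lemma S4_ext F G : (forall a b c d, F a b c d = G a b c d) -> S4 F = S4 G.
Proof.
move=> h; rewrite /S4; apply: eq_bigr => a _; apply: eq_bigr => b _;
  apply: eq_bigr => c _; apply: eq_bigr => d _; exact: h.
Qed.

Lemma S4D F G : S4 (fun a b c d => F a b c d + G a b c d) = S4 F + S4 G.
Proof.
rewrite /S4 -big_split; apply: eq_bigr => a _; rewrite -big_split;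
  apply: eq_bigr => b _; rewrite -big_split; apply: eq_bigr => c _;
  by rewrite -big_split.
Qed.

Lemma S4B F G : S4 (fun a b c d => F a b c d - G a b c d) = S4 F - S4 G.
Proof.
rewrite /S4 -sumrB; apply: eq_bigr => a _; rewrite -sumrB;
  apply: eq_bigr => b _; rewrite -sumrB; apply: eq_bigr => c _;
  by rewrite -sumrB.
Qed.

Lemma S4N F : S4 (fun a b c d => - F a b c d) = - S4 F.
Proof.
rewrite /S4 -sumrN; apply: eq_bigr => a _; rewrite -sumrN;
  apply: eq_bigr => b _; rewrite -sumrN; apply: eq_bigr => c _;
  by rewrite -sumrN.
Qed.

Lemma S4_delta F p q r s :
  S4 (fun a b c d => F a b c d * ((a, b, c, d) == (p, q, r, s))%:R) = F p q r s.
Proof.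
rewrite /S4 (bigD1 p) //= [X in _ + X]big1 ?addr0; last first.
  move=> a /negbTE hap; apply: big1 => b _; apply: big1 => c _; apply: big1 => d _.
  by rewrite !xpair_eqE hap /= mulr0.
rewrite (bigD1 q) //= [X in _ + X]big1 ?addr0; last first.
  move=> b /negbTE hb; apply: big1 => c _; apply: big1 => d _.
  by rewrite !xpair_eqE hb /= andbF mulr0.
rewrite (bigD1 r) //= [X in _ + X]big1 ?addr0; last first.
  move=> c /negbTE hc; apply: big1 => d _.
  by rewrite !xpair_eqE hc /= andbF mulr0.
rewrite (bigD1 s) //= [X in _ + X]big1 ?addr0; last first.
  by move=> d /negbTE hd; rewrite !xpair_eqE hd /= andbF mulr0.
by rewrite !eqxx mulr1.
Qed.

Lemma S4_sum (G : idx k -> idx k -> idx k -> idx k -> 'I_k -> R) :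
  S4 (fun a b c d => \sum_j G a b c d j) = \sum_j S4 (fun a b c d => G a b c d j).
Proof.
rewrite /S4.
under eq_bigr => a _ do under eq_bigr => b _ do under eq_bigr => c _ do rewrite exchange_big.
under eq_bigr => a _ do under eq_bigr => b _ do rewrite exchange_big.
under eq_bigr => a _ do rewrite exchange_big.
by rewrite exchange_big.
Qed.

Lemma S4_deltaN F p q r s :
  S4 (fun a b c d => - (F a b c d * ((a, b, c, d) == (p, q, r, s))%:R)) = - F p q r s.
Proof. by rewrite S4N S4_delta. Qed.

Definition c0 x := x (iU (@ord0 k)).
Definition cu x j := x (iU' j).
Definition cs x j := x (iS j).

Lemma curv_formula (fx fy fz fw : idx k -> R) :
  S4 (fun a b c d => fx a * fy b * fz c * fw d * curvb R a b c d) =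
  \sum_(j < k) ((fx (iU ord0) * fy (iU' j) - fx (iU' j) * fy (iU ord0)) * (fz (iU' j) * fw (iS j) - fz (iS j) * fw (iU' j))
              + (fz (iU ord0) * fw (iU' j) - fz (iU' j) * fw (iU ord0)) * (fx (iU' j) * fy (iS j) - fx (iS j) * fy (iU' j))).
Proof.
pose u0 := iU (@ord0 k).
rewrite (@S4_ext _ (fun a b c d => \sum_(j < k)
   (fx a * fy b * fz c * fw d * ((a, b, c, d) == (u0, iU' j, iU' j, iS j))%:R
  + fx a * fy b * fz c * fw d * ((a, b, c, d) == (iU' j, u0, iS j, iU' j))%:R
  + fx a * fy b * fz c * fw d * ((a, b, c, d) == (iU' j, iS j, u0, iU' j))%:R
  + fx a * fy b * fz c * fw d * ((a, b, c, d) == (iS j, iU' j, iU' j, u0))%:R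
  - fx a * fy b * fz c * fw d * ((a, b, c, d) == (iU' j, u0, iU' j, iS j))%:R
  - fx a * fy b * fz c * fw d * ((a, b, c, d) == (u0, iU' j, iS j, iU' j))%:R
  - fx a * fy b * fz c * fw d * ((a, b, c, d) == (iS j, iU' j, u0, iU' j))%:R
  - fx a * fy b * fz c * fw d * ((a, b, c, d) == (iU' j, iS j, iU' j, u0))%:R))); last first.
  move=> a b c d; rewrite /curvb mulr_sumr; apply: eq_bigr => j _.
  by rewrite !mulrBr !mulrDr.
etransitivity; first exact: S4_sum. apply: eq_bigr => j _.
rewrite !S4D !S4_deltaN !S4_delta /u0. ring.
Qed.

Lemma curvE x y z w : curv x y z w =
  \sum_(j < k) ((c0 x * cu y j - cu x j * c0 y) * (cu z j * cs w j - cs z j * cu w j)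
              + (c0 z * cu w j - cu z j * c0 w) * (cu x j * cs y j - cs x j * cu y j)).
Proof. exact: (curv_formula x y z w). Qed.

End Aux.
Arguments c0 {R k} x.
Arguments curvE {R k} x y z w.
Arguments cu {R k} x j.
Arguments cs {R k} x j.

Section Aux2.
Variable (R : realFieldType) (k : nat).
Implicit Types (x y z w : vec R k).

Definition S2 (F : idx k -> idx k -> R) : R := \sum_(a : idx k) \sum_(b : idx k) F a b.

Lemma S2_ext F G : (forall a b, F a b = G a b) -> S2 F = S2 G.
Proof. move=> h; rewrite /S2; apply: eq_bigr => a _; apply: eq_bigr => b _; exact: h. Qed.

Lemma S2D F G : S2 (fun a b => F a b + G a b) = S2 F + S2 G.
Proof. rewrite /S2 -big_split; apply: eq_bigr => a _; by rewrite -big_split. Qed.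

Lemma S2_sum (I : finType) (G : idx k -> idx k -> I -> R) :
  S2 (fun a b => \sum_j G a b j) = \sum_j S2 (fun a b => G a b j).
Proof.
rewrite /S2.
under eq_bigr => a _ do rewrite exchange_big.
by rewrite exchange_big.
Qed.

Lemma S2_delta F p q : S2 (fun a b => F a b * ((a, b) == (p, q))%:R) = F p q.
Proof.
rewrite /S2 (bigD1 p) //= [X in _ + X]big1 ?addr0; last first.
  move=> a /negbTE hap; apply: big1 => b _.
  by rewrite !xpair_eqE hap /= mulr0.
rewrite (bigD1 q) //= [X in _ + X]big1 ?addr0; last first.
  by move=> b /negbTE hb; rewrite !xpair_eqE hb /= andbF mulr0.
by rewrite !eqxx mulr1.
Qed.

Lemma S2_deltaM F p q (e : R) : S2 (fun a b => F a b * ((a, b) == (p, q))%:R * e) = F p q * e.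
Proof.
rewrite -(S2_delta (fun a b => F a b * e) p q); apply: S2_ext => a b; ring.
Qed.

Lemma ip_formula (eps : 'I_k -> R) (fx fy : idx k -> R) :
  S2 (fun a b => fx a * fy b * gram eps a b) =
  \sum_(i < k.+1) (fx (iU i) * fy (iV i) + fx (iV i) * fy (iU i))
  + \sum_(j < k) fx (iS j) * fy (iS j) * eps j.
Proof.
rewrite (@S2_ext _ (fun a b => \sum_(i < k.+1)
   (fx a * fy b * ((a, b) == (iU i, iV i))%:R + fx a * fy b * ((a, b) == (iV i, iU i))%:R)
   + \sum_(j < k) fx a * fy b * ((a, b) == (iS j, iS j))%:R * eps j)); last first.
  move=> a b; rewrite /gram mulrDr mulr_sumr mulr_sumr; congr (_ + _).
    by apply: eq_bigr => i _; rewrite mulrDr.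
  by apply: eq_bigr => i _; rewrite mulrA.
rewrite S2D; congr (_ + _).
  etransitivity; first exact: S2_sum.
  by apply: eq_bigr => i _; rewrite S2D !S2_delta.
etransitivity; first exact: S2_sum.
by apply: eq_bigr => i _; rewrite S2_deltaM.
Qed.

Lemma ipE (eps : 'I_k -> R) x y : ip eps x y =
  \sum_(i < k.+1) (x (iU i) * y (iV i) + x (iV i) * y (iU i))
  + \sum_(j < k) x (iS j) * y (iS j) * eps j.
Proof. exact: (ip_formula eps x y). Qed.

End Aux2.
Arguments ipE {R k} eps x y.


Section Aux3.
Variable (R : realFieldType) (k : nat).
Implicit Types (x y z w xi v : vec R k).

Lemma bvecE (a b : idx k) : bvec R a b = (b == a)%:R.
Proof. by rewrite ffunE. Qed.

Lemma iU'_eq (l j : 'I_k) : (iU' l == iU' j :> idx k) = (l == j).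
Proof. apply/eqP/eqP => [[] h|->] //; apply: val_inj; by rewrite !add0n in h. Qed.

Definition bV c : vec R k := bvec R (iV c).

Ltac bsimp := rewrite /c0 /cu /cs /bU /bU' /bS /bV bvecE /iU' /iU /iV /iS /=.
Lemma c0_bU0 : c0 (bU R (@ord0 k)) = 1. Proof. by bsimp. Qed.
Lemma cu_bU0 (l : 'I_k) : cu (bU R (@ord0 k)) l = 0. Proof. by bsimp. Qed.
Lemma cs_bU0 (l : 'I_k) : cs (bU R (@ord0 k)) l = 0. Proof. by bsimp. Qed.
Lemma c0_bU' (j : 'I_k) : c0 (bU' R j) = 0. Proof. by bsimp. Qed.
Lemma cu_bU' (j l : 'I_k) : cu (bU' R j) l = (l == j)%:R.
Proof. by rewrite /cu /bU' bvecE iU'_eq. Qed.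
Lemma cs_bU' (j l : 'I_k) : cs (bU' R j) l = 0. Proof. by bsimp. Qed.
Lemma c0_bS (j : 'I_k) : c0 (bS R j) = 0. Proof. by bsimp. Qed.
Lemma cu_bS (j l : 'I_k) : cu (bS R j) l = 0. Proof. by bsimp. Qed.
Lemma cs_bS (j l : 'I_k) : cs (bS R j) l = (l == j)%:R. Proof. by rewrite /cs /bS bvecE. Qed.
Lemma c0_bV (c : 'I_k.+1) : c0 (bV c) = 0. Proof. by bsimp. Qed.
Lemma cu_bV (c : 'I_k.+1) (l : 'I_k) : cu (bV c) l = 0. Proof. by bsimp. Qed.
Lemma cs_bV (c : 'I_k.+1) (l : 'I_k) : cs (bV c) l = 0. Proof. by bsimp. Qed.

Definition bco := (c0_bU0, cu_bU0, cs_bU0, c0_bU', cu_bU', cs_bU', c0_bS, cu_bS, cs_bS,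
  c0_bV, cu_bV, cs_bV).

Lemma big_only {I : finType} (j : I) (G : I -> R) : (forall l, l != j -> G l = 0) ->
  \sum_l G l = G j.
Proof. by move=> h; rewrite (bigD1 j) //= big1 ?addr0. Qed.

Lemma coords_AV xi : c0 xi = 0 -> (forall j, cu xi j = 0) -> (forall j, cs xi j = 0) -> AV xi.
Proof.
move=> h0 hu hs y z w; rewrite curvE big1 // => j _; rewrite h0 hu hs; ring.
Qed.

Lemma AV_coords xi : (0 < k)%N -> AV xi ->
  c0 xi = 0 /\ (forall j, cu xi j = 0) /\ (forall j, cs xi j = 0).
Proof.
move=> hk h; pose j0 := Ordinal hk.
split; [|split].
- have := h (bU' R j0) (bU' R j0) (bS R j0); rewrite curvE (big_only j0).
    by rewrite !bco !eqxx /= => e; lra.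
  by move=> l hl; rewrite !bco (negbTE hl) /=; ring.
- move=> j; have := h (bU R ord0) (bS R j) (bU' R j); rewrite curvE (big_only j).
    by rewrite !bco !eqxx /= => e; lra.
  by move=> l hl; rewrite !bco (negbTE hl) /=; ring.
- move=> j; have := h (bU' R j) (bU' R j) (bU R ord0); rewrite curvE (big_only j).
    by rewrite !bco !eqxx /= => e; lra.
  by move=> l hl; rewrite !bco (negbTE hl) /=; ring.
Qed.

Lemma iU_split (P : 'I_k.+1 -> Prop) : P ord0 -> (forall l, P (lift ord0 l)) -> forall c, P c.
Proof. by move=> h0 hl c; case: (unliftP ord0 c) => [l ->|->]. Qed.

Lemma ip_V (eps : 'I_k -> R) x v : (forall c, v (iU c) = 0) -> (forall j, v (iS j) = 0) ->
  ip eps x v = \sum_(c < k.+1) x (iU c) * v (iV c).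
Proof.
move=> hu hs; rewrite ipE [X in _ + X]big1 ?addr0; last by move=> j _; rewrite hs; ring.
by apply: eq_bigr => c _; rewrite hu mulr0 addr0.
Qed.

Lemma ip_noU (eps : 'I_k -> R) x y : (forall c, x (iU c) = 0) -> (forall c, y (iU c) = 0) ->
  ip eps x y = \sum_(j < k) x (iS j) * y (iS j) * eps j.
Proof.
move=> hx hy; rewrite ipE big1 ?add0r // => c _; rewrite hx hy; ring.
Qed.

Lemma AV_U (xi : vec R k) : (0 < k)%N -> AV xi -> forall c, xi (iU c) = 0.
Proof. move=> hk h; have [h0 [hu hs]] := AV_coords xi hk h; exact: iU_split. Qed.
Lemma AV_S (xi : vec R k) : (0 < k)%N -> AV xi -> forall j, xi (iS j) = 0.
Proof. move=> hk h; have [h0 [hu hs]] := AV_coords xi hk h; exact: hs. Qed.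
End Aux3.
Arguments bV R {k} c.
Arguments coords_AV {R k} xi.
Arguments AV_coords {R k} xi.
Arguments AV_U {R k} xi.
Arguments AV_S {R k} xi.
Arguments ip_V {R k} eps x v.
Arguments ip_noU {R k} eps x y.
Arguments big_only {R I} j G.
Lemma c0B (R : realFieldType) k (x y : vec R k) (r : R) : c0 (x - r *: y) = c0 x - r * c0 y.
Proof. by rewrite /c0 !ffunE. Qed.
Lemma cuB (R : realFieldType) k (x y : vec R k) (r : R) l : cu (x - r *: y) l = cu x l - r * cu y l.
Proof. by rewrite /cu !ffunE. Qed.
Lemma csB (R : realFieldType) k (x y : vec R k) (r : R) l : cs (x - r *: y) l = cs x l - r * cs y l.
Proof. by rewrite /cs !ffunE. Qed.


Lemma ffun_test (R : realFieldType) k (f g : vec R k) (a : R) i : (f - a *: g) i = f i - a * g i.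
Proof. by rewrite !ffunE. Qed.

Lemma orth_right (R : realFieldType) k (d : 'I_k -> 'I_k -> R) (eps : 'I_k -> R)
  (eps2 : forall j, eps j * eps j = 1) :
  (forall n m, \sum_l d n l * d m l * eps l = (n == m)%:R * eps n) ->
  forall l l', \sum_n d n l * d n l' * eps n = (l == l')%:R * eps l.
Proof.
move=> h l l'.
pose D : 'M[R]_k := \matrix_(l, n) d n l.
pose M : 'M[R]_k := \matrix_(n, l) (eps n * d n l * eps l).
have hMD : M *m D = 1%:M.
  apply/matrixP => n m; rewrite !mxE.
  under eq_bigr => j _ do rewrite !mxE.
  transitivity (eps n * \sum_j d n j * d m j * eps j).
    rewrite mulr_sumr; apply: eq_bigr => j _; ring.
  rewrite h; case: (eqVneq n m) => [->|hnm]; rewrite ?eqxx ?(negbTE hnm) /= ?mulr0 ?mul0r ?mulr0 //.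
  by rewrite mul1r eps2.
have := mulmx1C hMD => /matrixP /(_ l l'); rewrite !mxE.
under eq_bigr => j _ do rewrite !mxE.
move=> e.
transitivity ((\sum_j d j l * (eps j * d j l' * eps l')) * eps l').
  rewrite mulr_suml; apply: eq_bigr => j _; rewrite -[X in X = _]mulr1 -(eps2 l'); ring.
rewrite e; case: (eqVneq l l') => [->|hll]; rewrite ?eqxx ?(negbTE hll) /= ?mul0r ?mul1r //.
Qed.


Theorem theorem1p5 (R : realFieldType) (k : nat) (eps : 'I_k -> R)
    (heps : forall j, eps j = 1 \/ eps j = -1)
    (hk : (2 <= k)%N)
    (A : {linear vec R k -> vec R k})
    (hAbij : bijective A)
    (hAip : forall x y, ip eps (A x) (A y) = ip eps x y)
    (hAR : forall x y z w, curv (A x) (A y) (A z) (A w) = curv x y z w) :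
  exists (sigma : {perm 'I_k}) (a0 : R) (b : 'I_k -> R),
    (forall j, `|a0| * b j ^+ 2 = 1) /\
    AV (A (bU R (@ord0 k)) - a0 *: bU R (@ord0 k)) /\
    (forall j, ASV eps (A (bU' R j) - b j *: bU' R (sigma j))) /\
    (forall j, AV (A (bS R j) - Num.sg a0 *: bS R (sigma j))).
Proof.
case: hAbij => g gK Kg.
have hk0 : (0 < k)%N by apply: leq_trans hk.
have hk1 : (1 < k)%N by [].
pose j0 := Ordinal hk0. pose j1 := Ordinal hk1.
have hother : forall m : 'I_k, exists n, n != m.
  move=> m; case: (eqVneq m j0) => [->|h]; last by exists j0; rewrite eq_sym.
  by exists j1.
have epsnz : forall j, eps j != 0.
  by move=> j; case: (heps j) => ->; rewrite ?oppr_eq0 oner_eq0.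
have eps2 : forall j, eps j * eps j = 1.
  by move=> j; case: (heps j) => ->; rewrite ?mulrNN mulr1.
have AVA : forall xi, AV xi -> AV (A xi).
  by move=> xi h y z w; rewrite -[y]Kg -[z]Kg -[w]Kg hAR h.
have AVAi : forall xi, AV (A xi) -> AV xi.
  by move=> xi h y z w; rewrite -hAR h.
have AVbV : forall c : 'I_k.+1, AV (bV R c).
  by move=> c; apply: coords_AV => *; rewrite bco.
have hVpre : forall c : 'I_k.+1, AV (g (bV R c)).
  by move=> c; apply: AVAi; rewrite Kg.
have bVU : forall c c' : 'I_k.+1, bV R c (iU c') = 0 by move=> c c'; rewrite /bV bvecE.
have bVS : forall (c : 'I_k.+1) (j : 'I_k), bV R c (iS j) = 0 by move=> c j; rewrite /bV bvecE.
have hSU : forall (n : 'I_k) (c : 'I_k.+1), A (bS R n) (iU c) = 0.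
  move=> n c; have e := hAip (bS R n) (g (bV R c)).
  rewrite Kg (ip_V _ _ _ (bVU c) (bVS c)) in e.
  rewrite (ip_V _ _ _ (AV_U _ hk0 (hVpre c)) (AV_S _ hk0 (hVpre c))) in e.
  rewrite (big_only c) in e; last first.
    move=> c' hc; rewrite /bV bvecE.
    have -> : (iV c' == iV c :> idx k) = false by apply/eqP; case => e; rewrite e eqxx in hc.
    by rewrite mulr0.
  rewrite /bV bvecE eqxx mulr1 in e; rewrite e big1 // => c' _.
  by rewrite /bS bvecE mul0r.
set a := A (bU R ord0).
have hJ : forall y w, curv a y a w = 0.
  move=> y w; rewrite /a -[y]Kg -[w]Kg hAR curvE big1 // => l _.
  by rewrite !bco; ring.
have ha_u : forall j, cu a j = 0.
  move=> j; have := hJ (bU R ord0) (bS R j); rewrite curvE (big_only j); last first.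
    by move=> l hl; rewrite !bco (negbTE hl) /=; ring.
  rewrite !bco eqxx /= => e.
  have h2 : cu a j * cu a j = 0 by nra.
  by move/eqP: h2; rewrite mulf_eq0 orbb => /eqP.
have ha_s0 : forall j, c0 a * cs a j = 0.
  move=> j; have := hJ (bU' R j) (bU' R j); rewrite curvE (big_only j); last first.
    by move=> l hl; rewrite !bco (negbTE hl) /=; ring.
  rewrite !bco eqxx /= => e; nra.
have ha0v : c0 a * A (bV R ord0) (iV ord0) = 1.
  have e := hAip (bU R ord0) (bV R ord0).
  rewrite (ip_V _ _ _ (bVU ord0) (bVS ord0)) in e.
  rewrite (ip_V _ _ _ (AV_U _ hk0 (AVA _ (AVbV ord0))) (AV_S _ hk0 (AVA _ (AVbV ord0)))) in e.
  rewrite big_ord_recl [X in _ + X]big1 ?addr0 in e; last by move=> l _; apply/eqP; rewrite mulf_eq0; apply/orP; left; apply/eqP; exact: (ha_u l).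
  rewrite e big_ord_recl big1 ?addr0.
    by rewrite /bU /bV !bvecE !eqxx mulr1.
  by move=> l _; rewrite /bU /bV !bvecE /iU /= mul0r.
have a0nz : c0 a != 0.
  by apply/eqP => h0; move: ha0v; rewrite h0 mul0r => /eqP; rewrite eq_sym oner_eq0.
have ha_s : forall j, cs a j = 0.
  move=> j; have := ha_s0 j; move/eqP; rewrite mulf_eq0 (negbTE a0nz) /=; exact/eqP.
have hS0 : forall n, c0 (A (bS R n)) = 0 by move=> n; exact: hSU n ord0.
have hSu : forall n l, cu (A (bS R n)) l = 0 by move=> n l; exact: hSU n (lift ord0 l).
have hstar : forall i m n, \sum_l c0 a * (cu (A (bU' R i)) l * cu (A (bU' R m)) l * cs (A (bS R n)) l)
   = (m == i)%:R * (m == n)%:R.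
  move=> i m n; have := hAR (bS R n) (bU' R i) (bU R ord0) (bU' R m).
  rewrite -/a !curvE [X in _ = X -> _](big_only m); last first.
    by move=> l hl; rewrite !bco (negbTE hl) /=; ring.
  rewrite !bco eqxx /= => e.
  transitivity (- \sum_l ((c0 (A (bS R n)) * cu (A (bU' R i)) l - cu (A (bS R n)) l * c0 (A (bU' R i))) *
        (cu a l * cs (A (bU' R m)) l - cs a l * cu (A (bU' R m)) l) +
        (c0 a * cu (A (bU' R m)) l - cu a l * c0 (A (bU' R m))) *
        (cu (A (bS R n)) l * cs (A (bU' R i)) l - cs (A (bS R n)) l * cu (A (bU' R i)) l))).
    rewrite -sumrN; apply: eq_bigr => l _; rewrite hS0 hSu ha_u ha_s; ring.
  rewrite e; ring.
pose p : 'I_k -> 'I_k -> R := fun i l => cu (A (bU' R i)) l.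
pose d : 'I_k -> 'I_k -> R := fun n l => cs (A (bS R n)) l.
have hD : forall n m, \sum_l d n l * d m l * eps l = (n == m)%:R * eps n.
  move=> n m; have := hAip (bS R n) (bS R m).
  rewrite (ip_noU _ _ _ (hSU n) (hSU m)) ip_noU; last 2 first.
  - by move=> c; rewrite /bS bvecE.
  - by move=> c; rewrite /bS bvecE.
  move=> ->; rewrite (big_only n).
    by rewrite /bS !bvecE eqxx mul1r.
  move=> l hl; rewrite /bS !bvecE.
  have -> : (iS l == iS n :> idx k) = false by apply/eqP; case => e; rewrite e eqxx in hl.
  by rewrite !mul0r.
have hD2 := @orth_right R k d eps eps2 hD.
have hss : forall i m l, c0 a * (p i l * p m l) * eps l = (m == i)%:R * d m l * eps m.
  move=> i m l.
  have gen : forall l', \sum_n c0 a * (p i l' * p m l' * d n l') * (d n l * eps n)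
      = c0 a * (p i l' * p m l') * ((l' == l)%:R * eps l').
    move=> l'; rewrite -hD2 mulr_sumr; apply: eq_bigr => n _; rewrite /p /d; ring.
  transitivity (\sum_n (\sum_l' c0 a * (p i l' * p m l' * d n l')) * (d n l * eps n)).
    under eq_bigr do rewrite mulr_suml.
    rewrite exchange_big /= (big_only l).
      by rewrite gen eqxx mul1r.
    by move=> l' hl'; rewrite gen (negbTE hl') mul0r mulr0.
  under eq_bigr do rewrite hstar.
  rewrite (big_only m); first by rewrite eqxx mulr1 /d mulrA.
  by move=> n hn; rewrite (eq_sym m n) (negbTE hn) mulr0 mul0r.
have hoff : forall i m l, i != m -> p i l * p m l = 0.
  move=> i m l hne; apply/eqP; rewrite mulf_eq0; have := hss i m l.
  rewrite (eq_sym m i) (negbTE hne) /= !mul0r => /eqP.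
  by rewrite !mulf_eq0 (negbTE a0nz) (negbTE (epsnz l)) /= orbF.
pose s0 i := odflt i [pick l | p i l != 0].
have hs0 : forall i, p i (s0 i) != 0.
  move=> i; rewrite /s0; case: pickP => [l hl //|h0] /=; exfalso.
  have hd0 : forall l, d i l = 0.
    move=> l; have := hss i i l; move: (h0 l) => /= /negbFE/eqP ->.
    rewrite eqxx /= !(mulr0, mul0r, mul1r) => /esym/eqP; rewrite mulf_eq0 (negbTE (epsnz i)) orbF.
    by move/eqP.
  have := hD i i; rewrite big1 => [|l _]; last by rewrite hd0 !mul0r.
  by rewrite eqxx mul1r => /esym/eqP; rewrite (negbTE (epsnz i)).
have s0inj : injective s0.
  move=> i m e; apply/eqP; apply/negPn/negP => hne.
  have := hoff i m (s0 i) hne; rewrite {2}e => /eqP.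
  by rewrite mulf_eq0 (negbTE (hs0 i)) (negbTE (hs0 m)).
pose sigma := perm s0inj.
have hsig : forall i, sigma i = s0 i by move=> i; rewrite permE.
have hp0 : forall i l, l != sigma i -> p i l = 0.
  move=> i l hl; pose m := (sigma^-1)%g l.
  have hlm : l = sigma m by rewrite /m permKV.
  have hmi : i != m by apply/eqP => him; rewrite hlm -him eqxx in hl.
  have := hoff i m l hmi; move/eqP; rewrite mulf_eq0 hlm hsig (negbTE (hs0 m)) orbF.
  by move/eqP.
have hd0 : forall i l, l != sigma i -> d i l = 0.
  move=> i l hl; have := hss i i l; rewrite hp0 // mul0r mulr0 mul0r eqxx mul1r.
  by move/esym/eqP; rewrite mulf_eq0 (negbTE (epsnz i)) orbF => /eqP.
pose mu i := p i (sigma i).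
pose lam i := d i (sigma i).
have hmunz : forall i, mu i != 0 by move=> i; rewrite /mu hsig.
have hlam2 : forall i, lam i * lam i * eps (sigma i) = eps i.
  move=> i; have := hD i i; rewrite (big_only (sigma i)); last first.
    by move=> l hl; rewrite hd0 // !mul0r.
  by rewrite eqxx mul1r.
have hmu : forall i, c0 a * (mu i * mu i) * eps (sigma i) = lam i * eps i.
  by move=> i; rewrite hss eqxx mul1r.
have hfin : forall i, lam i = Num.sg (c0 a) /\ `|c0 a| * mu i ^+ 2 = 1.
  move=> i; have h1 := hlam2 i; have h2 := hmu i; have hm := hmunz i.
  have hmu2 : 0 < mu i * mu i.
    by rewrite lt_def mulf_neq0 //= -expr2 sqr_ge0.
  have [hl2 h3] : lam i * lam i = 1 /\ c0 a * (mu i * mu i) = lam i.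
    by case: (heps i) h1 h2 => ->; case: (heps (sigma i)) => -> h1 h2; split; nra.
  have : (lam i - 1) * (lam i + 1) == 0 by apply/eqP; nra.
  rewrite mulf_eq0 subr_eq0 addr_eq0 => /orP [] /eqP hl.
  - have ha : 0 < c0 a by rewrite -(pmulr_lgt0 _ hmu2) h3 hl ltr01.
    by rewrite gtr0_sg // gtr0_norm // hl expr2; split => //; rewrite h3 hl.
  - have ha : c0 a < 0 by rewrite -(pmulr_llt0 _ hmu2) h3 hl ltrN10.
    by rewrite ltr0_sg // ltr0_norm // hl expr2; split => //; rewrite mulNr h3 hl opprK.
have hc : forall m, c0 (A (bU' R m)) = 0.
  move=> m; have [n hnm] := hother m.
  have := hAR (bS R n) (bU' R n) (bU' R n) (bU' R m).
  rewrite !curvE [X in _ = X -> _]big1; last by move=> l _; rewrite !bco; ring.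
  rewrite (big_only (sigma n)); last first.
    move=> l hl; rewrite hS0 hSu.
    have -> : cs (A (bS R n)) l = 0 by exact: (hd0 n l hl).
    ring.
  rewrite hS0 hSu.
  have -> : cu (A (bU' R m)) (sigma n) = 0.
    apply: (hp0 m); apply/eqP => e; move/eqP: hnm; apply; exact: (perm_inj e).
  move=> e.
  have : lam n * (mu n * mu n) * c0 (A (bU' R m)) = 0.
    by rewrite -e /lam /mu /d /p; ring.
  move/eqP; rewrite !mulf_eq0 (negbTE (hmunz n)) /= orbF => /orP [] /eqP //.
  move=> hl0; have := hlam2 n; rewrite hl0 !mul0r => /esym/eqP.
  by rewrite (negbTE (epsnz n)).
exists sigma, (c0 a), mu.
split; first by move=> j; case: (hfin j).
split.
  apply: coords_AV => [|l|l]; rewrite ?c0B ?cuB ?csB !bco ?ha_u ?ha_s; ring.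
split.
  move=> j xi hxi; rewrite (ip_V _ _ _ (AV_U _ hk0 hxi) (AV_S _ hk0 hxi)) big1 // => c _.
  apply/eqP; rewrite mulf_eq0; apply/orP; left; apply/eqP; move: c; apply: iU_split.
    change (c0 (A (bU' R j) - mu j *: bU' R (sigma j)) = 0).
    by rewrite c0B hc !bco; ring.
  move=> l; change (cu (A (bU' R j) - mu j *: bU' R (sigma j)) l = 0).
  rewrite cuB cu_bU'.
  case: (eqVneq l (sigma j)) => [hls|hl] /=.
    by rewrite mulr1 hls subrr.
  by rewrite mulr0 subr0; exact: (hp0 j l hl).
move=> j; apply: coords_AV => [|l|l]; rewrite ?c0B ?cuB ?csB !bco ?hS0 ?hSu; first by ring.
  by ring.
case: (eqVneq l (sigma j)) => [hls|hl] /=.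
  by rewrite mulr1 hls; case: (hfin j) => <- _; rewrite /lam /d subrr.
by rewrite mulr0 subr0; exact: (hd0 j l hl).
Qed.
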